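(* Let $\mathcal{S}$ be a discrete subgroup of $O(n+1)$. Then $\mathcal{S}$ satisfies the spanning property if and only if it satisfies the bounded ratio condition $$\sup_{a\in\mathbb{S}^n}\gamma_a<\infty,\qquad \gamma_a:=\max_{\mathbb{S}^n}h_a\Big/\min_{\mathbb{S}^n}h_a,$$ where $h_a$ is the support function of $P_a=\mathrm{conv}\{\phi(a):\phi\in\mathcal{S}\}$.
   Context: The spanning property: for every $a\in\mathbb{S}^n$, $P_a$ is a non-degenerate $(n+1)$-dimensional polytope in $\mathbb{R}^{n+1}$. The support function of a compact convex set $K$ is $h(x)=\max\{z\cdot x:z\in K\}$, $x\in\mathbb{S}^n$. *)

(* Defs.v *)
From HB Require Import structures.
From mathcomp Require Import all_boot all_order all_algebra.
From mathcomp Require Import boolp classical_sets reals.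
Set Implicit Arguments. Unset Strict Implicit. Unset Printing Implicit Defensive.
Import Order.TTheory GRing.Theory Num.Theory.
Local Open Scope ring_scope.
Local Open Scope classical_set_scope.

Section Defs.
Variable R : realType.

Definition dotv (m : nat) (u v : 'cV[R]_m) : R := \sum_(i < m) u i 0 * v i 0.

Definition sphere (n : nat) : set 'cV[R]_n.+1 := [set a | dotv a a = 1].
Arguments sphere n : clear implicits.

Definition orthogonal_mx (m : nat) (M : 'M[R]_m) : Prop := M *m M^T = 1%:M.

Definition subgroup_O (n : nat) (S : set 'M[R]_n.+1) : Prop :=
  [/\ (forall M, S M -> orthogonal_mx M),
      S 1%:M,
      (forall M N, S M -> S N -> S (M *m N)) &
      (forall M, S M -> S (invmx M))].

Definition discrete_mx (n : nat) (S : set 'M[R]_n.+1) : Prop :=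
  forall M, S M -> exists e : R, 0 < e /\
    forall N, S N -> (forall i j, `|N i j - M i j| < e) -> N = M.

Definition conv (m : nat) (A : set 'cV[R]_m) : set 'cV[R]_m :=
  [set z | exists (k : nat) (w : 'I_k -> R) (p : 'I_k -> 'cV[R]_m),
     [/\ (forall i, 0 <= w i), \sum_(i < k) w i = 1,
         (forall i, A (p i)) & z = \sum_(i < k) w i *: p i]].

Definition orbit (n : nat) (S : set 'M[R]_n.+1) (a : 'cV[R]_n.+1) :=
  [set z | exists phi, S phi /\ z = phi *m a].
Definition P (n : nat) (S : set 'M[R]_n.+1) (a : 'cV[R]_n.+1) := conv (orbit S a).

(* K is (n+1)-dimensional: its affine hull is all of R^(n+1), i.e. K contains
   n+2 affinely independent points p0, p_0, ..., p_n. *)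
Definition full_dim (n : nat) (K : set 'cV[R]_n.+1) : Prop :=
  exists (p0 : 'cV[R]_n.+1) (p : 'I_n.+1 -> 'cV[R]_n.+1),
    [/\ K p0, (forall j, K (p j)) &
        \det (\matrix_(i, j) (p j i 0 - p0 i 0)) != 0].

Definition spanning (n : nat) (S : set 'M[R]_n.+1) : Prop :=
  forall a, sphere n a -> full_dim (P S a).

(* Support function h_K(x) = max {z . x : z in K} (a sup; attained for
   compact K). *)
Definition support_fn (n : nat) (K : set 'cV[R]_n.+1) (x : 'cV[R]_n.+1) : R :=
  sup [set dotv z x | z in K].

Definition hmax (n : nat) (S : set 'M[R]_n.+1) (a : 'cV[R]_n.+1) : R :=
  sup [set support_fn (P S a) x | x in sphere n].
Definition hmin (n : nat) (S : set 'M[R]_n.+1) (a : 'cV[R]_n.+1) : R :=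
  inf [set support_fn (P S a) x | x in sphere n].
Definition gamma (n : nat) (S : set 'M[R]_n.+1) (a : 'cV[R]_n.+1) : R :=
  hmax S a / hmin S a.

(* Bounded ratio condition sup_a gamma_a < oo: the ratios are well defined
   (min h_a > 0) and uniformly bounded. *)
Definition bounded_ratio (n : nat) (S : set 'M[R]_n.+1) : Prop :=
  (forall a, sphere n a -> 0 < hmin S a) /\
  exists C : R, forall a, sphere n a -> gamma S a <= C.

End Defs.
Arguments sphere {R} n.

(* Main.v *)
Require Import Defs.
From HB Require Import structures.
From mathcomp Require Import all_boot all_order all_algebra.
From mathcomp Require Import boolp classical_sets reals.
From mathcomp Require Import complex.
From mathcomp Require Import ring lra.
Set Implicit Arguments. Unset Strict Implicit. Unset Printing Implicit Defensive.
Import Order.TTheory GRing.Theory Num.Theory.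
Local Open Scope ring_scope.

Section Basic.
Variable R : realType.
Variable m : nat.
Implicit Types u v x y : 'cV[R]_m.

Lemma dotvE u v : dotv u v = (u^T *m v) 0 0.
Proof. by rewrite /dotv mxE; apply: eq_bigr => i _; rewrite mxE. Qed.

Lemma dotvC u v : dotv u v = dotv v u.
Proof. by apply: eq_bigr => i _; rewrite mulrC. Qed.

Lemma dotvDl u v x : dotv (u + v) x = dotv u x + dotv v x.
Proof. by rewrite /dotv -big_split; apply: eq_bigr => i _; rewrite mxE mulrDl. Qed.

Lemma dotvZl (c : R) u x : dotv (c *: u) x = c * dotv u x.
Proof. by rewrite /dotv mulr_sumr; apply: eq_bigr => i _; rewrite mxE mulrA. Qed.

Lemma dotvNl u x : dotv (- u) x = - dotv u x.
Proof. by rewrite -scaleN1r dotvZl mulN1r. Qed.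

Lemma dotvBl u v x : dotv (u - v) x = dotv u x - dotv v x.
Proof. by rewrite dotvDl dotvNl. Qed.

Lemma dotv0l x : dotv 0 x = 0.
Proof. by rewrite /dotv big1 // => i _; rewrite mxE mul0r. Qed.

Lemma dotv_suml (I : Type) (r : seq I) (P : pred I) (F : I -> 'cV[R]_m) x :
  dotv (\sum_(i <- r | P i) F i) x = \sum_(i <- r | P i) dotv (F i) x.
Proof.
elim/big_rec2: _ => [|i y1 y2 _ <-]; first exact: dotv0l.
by rewrite dotvDl.
Qed.

Lemma dotvNr u x : dotv u (- x) = - dotv u x.
Proof. by rewrite dotvC dotvNl dotvC. Qed.

Lemma dotvZr (c : R) u x : dotv u (c *: x) = c * dotv u x.
Proof. by rewrite dotvC dotvZl dotvC. Qed.

Lemma dotv_mull (A : 'M[R]_m) u v : dotv (A *m u) v = dotv u (A^T *m v).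
Proof. by rewrite !dotvE trmx_mul mulmxA. Qed.

Lemma dotv_ge0 u : 0 <= dotv u u.
Proof. by apply: sumr_ge0 => i _; rewrite -expr2 sqr_ge0. Qed.

Lemma dotv_eq0 u : dotv u u = 0 -> u = 0.
Proof.
move=> /eqP; rewrite psumr_eq0; last by move=> i _; rewrite -expr2 sqr_ge0.
move=> /allP H; apply/matrixP => i j; rewrite (ord1 j) mxE.
by have := H i (mem_index_enum _); rewrite -expr2 sqrf_eq0 => /eqP.
Qed.

Lemma dotv_le1 u v : dotv u u = 1 -> dotv v v = 1 -> dotv u v <= 1.
Proof.
move=> hu hv; have := dotv_ge0 (u - v).
rewrite dotvBl !(dotvC _ (u - v)) !dotvBl hu hv (dotvC v u).
by move=> h; lra.
Qed.

End Basic.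


Section Group.
Variable R : realType.
Variable n : nat.
Local Notation m := n.+1.
Variable S : set 'M[R]_m.
Hypothesis HS : subgroup_O S.

Lemma S_orth M : S M -> M *m M^T = 1%:M.
Proof. by case: HS => h _ _ _ /h. Qed.

Lemma S_orthT M : S M -> M^T *m M = 1%:M.
Proof. by move=> /S_orth /mulmx1C. Qed.

Lemma S_one : S 1%:M. Proof. by case: HS. Qed.

Lemma S_mul M N : S M -> S N -> S (M *m N). Proof. by case: HS => _ _ h _; apply: h. Qed.

Lemma S_tr M : S M -> S M^T.
Proof.
move=> SM; have [hu _] := mulmx1_unit (S_orth SM).
have -> : M^T = invmx M.
  by rewrite -[M^T]mul1mx -(mulVmx hu) -mulmxA S_orth // mulmx1.
by case: HS => _ _ _ h; apply: h.
Qed.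

Lemma S_dot M u v : S M -> dotv (M *m u) (M *m v) = dotv u v.
Proof. by move=> SM; rewrite dotv_mull mulmxA S_orthT // mul1mx. Qed.


Lemma S_entry M i j : S M -> `|M i j| <= 1.
Proof.
move=> SM; have := congr1 (fun A : 'M[R]_m => A i i) (S_orth SM).
rewrite !mxE eqxx /= => h.
have : M i j ^+ 2 <= 1.
  suff : M i j ^+ 2 <= \sum_(k < m) M i k * M^T k i by rewrite h.
  rewrite (bigD1 j) //= mxE -expr2 lerDl.
  by apply: sumr_ge0 => k _; rewrite mxE -expr2 sqr_ge0.
rewrite -real_normK ?num_real // => hs; have := normr_ge0 (M i j); nra.
Qed.

Lemma S_sep (e : R) M N : 0 < e ->
  (forall P, S P -> (forall i j, `|P i j - (1%:M : 'M[R]_m) i j| < e) -> P = 1%:M) ->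
  S M -> S N -> (forall i j, `|N i j - M i j| < e / m%:R) -> N = M.
Proof.
move=> e0 disc SM SN close.
have SP : S (M^T *m N) by apply: S_mul => //; apply: S_tr.
have P1 : M^T *m N = 1%:M.
  apply: disc => // i j.
  have -> : (M^T *m N) i j - (1%:M : 'M[R]_m) i j = (M^T *m (N - M)) i j.
    by rewrite mulmxBr S_orthT // [in RHS]mxE [(- _ : 'M[R]_m) i j]mxE.
  rewrite mxE; apply: le_lt_trans; first exact: ler_norm_sum.
  apply: (@lt_le_trans _ _ (\sum_(k < m) e / m%:R)).
    apply: ltr_sum; first by apply/hasP; exists ord0; rewrite ?mem_index_enum.
    move=> k _; rewrite normrM !mxE.
    apply: (le_lt_trans _ (close k j)).
    rewrite -[X in _ <= X]mul1r ler_wpM2r ?normr_ge0 //.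
    exact: S_entry.
  by rewrite sumr_const card_ord -[_ *+ m]mulr_natr divfK // pnatr_eq0.
by rewrite -[LHS]mul1mx -(S_orth SM) -mulmxA P1 mulmx1.
Qed.

End Group.


Lemma trunc_close (R : realType) (K : nat) (x y : R) :
  `|x| <= 1 -> `|y| <= 1 ->
  Num.truncn ((x + 1) * K%:R) = Num.truncn ((y + 1) * K%:R) ->
  `|y - x| * K%:R < 1.
Proof.
move=> hx hy.
have Kp : 0 <= (K%:R : R) by [].
move: hx hy; rewrite !ler_norml => /andP[hx1 hx2] /andP[hy1 hy2] h.
have ax : 0 <= (x + 1) * K%:R by apply: mulr_ge0 => //; lra.
have ay : 0 <= (y + 1) * K%:R by apply: mulr_ge0 => //; lra.
have := truncn_itv ax; have := truncn_itv ay; rewrite h.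
set t := Num.truncn _ => /andP[a1 a2] /andP[b1 b2].
suff : `|(y - x) * K%:R| < 1 by rewrite normrM (ger0_norm Kp).
rewrite ltr_norml; move: a2 b2; rewrite -(addn1 t) natrD.
move=> a2 b2; apply/andP; split; nra.
Qed.

Lemma trunc_bound (R : realType) (K : nat) (x : R) :
  `|x| <= 1 -> (Num.truncn ((x + 1) * K%:R) < (K.*2).+1)%N.
Proof.
move=> hx; have Kp : 0 <= (K%:R : R) by [].
move: hx; rewrite ler_norml => /andP[hx1 hx2].
rewrite Num.Theory.truncn_lt_nat; last by apply: mulr_ge0 => //; lra.
rewrite -addn1 natrD -muln2 natrM; nra.
Qed.

Section Finite.
Variable R : realType.
Variable n : nat.
Local Notation m := n.+1.
Variable S : set 'M[R]_m.
Hypothesis HS : subgroup_O S.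
Hypothesis Hd : discrete_mx S.

Lemma S_finite : exists s : seq 'M[R]_m, uniq s /\ forall M, S M <-> M \in s.
Proof.
have [e [e0 disc]] := Hd (S_one HS).
pose d := e / m%:R.
have d0 : 0 < d by rewrite divr_gt0 // ltr0n.
pose K := Num.Def.archi_bound d^-1.
have hK : d^-1 < K%:R by apply: archi_boundP; rewrite invr_ge0 ltW.
pose code (M : 'M[R]_m) : {ffun 'I_m * 'I_m -> 'I_(K.*2).+1} :=
  [ffun ij => inord (Num.truncn ((M ij.1 ij.2 + 1) * K%:R))].
have inj : forall M N, S M -> S N -> code M = code N -> N = M.
  move=> M N SM SN ec; apply: (S_sep HS e0 disc SM SN) => i j.
  have := congr1 (fun f : {ffun 'I_m * 'I_m -> 'I_(K.*2).+1} => val (f (i, j))) ec.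
  rewrite !ffunE /=.
  rewrite !inordK; try exact: trunc_bound (S_entry HS _ _ _).
  move=> /(trunc_close (S_entry HS i j SM) (S_entry HS i j SN)) h.
  have hd : d^-1 * d = 1 by rewrite mulVf // gt_eqF.
  have hi : 0 < d^-1 by rewrite invr_gt0.
  have := normr_ge0 (N i j - M i j); rewrite -/d; nra.
pose g (c : {ffun 'I_m * 'I_m -> 'I_(K.*2).+1}) : option 'M[R]_m :=
  if pselect (exists M, S M /\ code M = c) is left H then Some (proj1_sig (cid H))
  else None.
exists (undup (pmap g (enum {ffun 'I_m * 'I_m -> 'I_(K.*2).+1}))).
split; first exact: undup_uniq.
move=> M; rewrite mem_undup mem_pmap; split.
  move=> SM; apply/mapP; exists (code M); first by rewrite mem_enum.
  rewrite /g; case: pselect => [H|]; last by move=> []; exists M.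
  case: (cid H) => M' [SM' cM'] /=; congr Some; exact: inj.
move=> /mapP [c _]; rewrite /g; case: pselect => [H|] //.
by case: (cid H) => M' [SM' cM'] /= [->].
Qed.

End Finite.

Local Open Scope classical_set_scope.

Section Conv.
Variable R : realType.
Variable m : nat.

Lemma conv_le (A : set 'cV[R]_m) x (B : R) :
  (forall p, A p -> dotv p x <= B) -> forall z, conv A z -> dotv z x <= B.
Proof.
move=> hA z [k [w [p [w0 w1 Ap ->]]]].
rewrite dotv_suml; under eq_bigr do rewrite dotvZl.
apply: (@le_trans _ _ (\sum_(i < k) w i * B)).
  by apply: ler_sum => i _; apply: ler_wpM2l => //; apply: hA.
by rewrite -mulr_suml w1 mul1r.
Qed.

Lemma conv_ge (A : set 'cV[R]_m) x (B : R) :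
  (forall p, A p -> B <= dotv p x) -> forall z, conv A z -> B <= dotv z x.
Proof.
move=> hA z Az; rewrite -lerN2 -dotvNr; apply: (conv_le _ Az) => p Ap.
by rewrite dotvNr lerN2; apply: hA.
Qed.

Lemma conv_mem (A : set 'cV[R]_m) p : A p -> conv A p.
Proof.
move=> Ap; exists 1%N, (fun _ => 1), (fun _ => p); split => //.
  by rewrite big_ord1.
by rewrite big_ord1 scale1r.
Qed.

End Conv.

Section Support.
Variable R : realType.
Variable n : nat.
Local Notation m := n.+1.
Variable S : set 'M[R]_m.
Hypothesis HS : subgroup_O S.

Local Notation h a x := (support_fn (P S a) x).

Lemma orbitP a phi : S phi -> P S a (phi *m a).
Proof. by move=> Sphi; apply: conv_mem; exists phi. Qed.

Lemma a_in_P a : P S a a.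
Proof. by have := orbitP a (S_one HS); rewrite mul1mx. Qed.

Lemma h_ub a x (B : R) : (forall phi, S phi -> dotv (phi *m a) x <= B) -> h a x <= B.
Proof.
move=> hB; apply: ge_sup; first by exists (dotv a x), a => //; apply: a_in_P.
move=> y [z Pz <-]; apply: (conv_le _ Pz) => p [phi [Sphi ->]]; exact: hB.
Qed.

Lemma sphere_S a phi : sphere n a -> S phi -> sphere n (phi *m a).
Proof. by rewrite /sphere /= => ha Sphi; rewrite (S_dot HS). Qed.

Lemma h_lb a x phi : sphere n a -> sphere n x -> S phi -> dotv (phi *m a) x <= h a x.
Proof.
move=> ha hx Sphi; apply: ub_le_sup; last by exists (phi *m a) => //; apply: orbitP.
exists 1 => y [z Pz <-]; apply: (conv_le _ Pz) => p [psi [Spsi ->]].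
by apply: dotv_le1 => //; apply: sphere_S.
Qed.

Lemma h_ge a x : sphere n a -> sphere n x -> -1 <= h a x.
Proof.
move=> ha hx; apply: le_trans (h_lb ha hx (S_one HS)).
rewrite mul1mx lerNl -dotvNr; apply: dotv_le1 => //.
by rewrite /sphere /= dotvNr dotvC dotvNr opprK.
Qed.

Lemma sphere_e0 : sphere n (delta_mx 0 0 : 'cV[R]_m).
Proof.
rewrite /sphere /= /dotv (bigD1 0) //= big1 ?addr0; first by rewrite mxE eqxx mulr1.
by move=> i /negbTE hi; rewrite mxE hi mul0r.
Qed.

Lemma hmax_le1 a : sphere n a -> hmax S a <= 1.
Proof.
move=> ha; apply: ge_sup; first by exists (h a (delta_mx 0 0)), (delta_mx 0 0) => //; exact: sphere_e0.
move=> y [x hx <-]; apply: h_ub => phi Sphi; apply: dotv_le1 => //; exact: sphere_S.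
Qed.

Lemma hmin_ge a (c : R) : (forall x, sphere n x -> c <= h a x) -> c <= hmin S a.
Proof.
move=> hc; apply: lb_le_inf; first by exists (h a (delta_mx 0 0)), (delta_mx 0 0) => //; exact: sphere_e0.
by move=> y [x hx <-]; apply: hc.
Qed.

Lemma hmin_le a x : sphere n a -> sphere n x -> hmin S a <= h a x.
Proof.
move=> ha hx; apply: ge_inf; last by exists x.
by exists (-1) => y [z hz <-]; apply: h_ge.
Qed.

End Support.

Local Close Scope classical_set_scope.
Local Open Scope classical_set_scope.

Section Hyper.
Variable R : realType.
Variable n : nat.
Local Notation m := n.+1.
Variable S : set 'M[R]_m.
Hypothesis HS : subgroup_O S.

Lemma hyper_not_full a (u : 'cV[R]_m) (c : R) : u != 0 ->
  (forall phi, S phi -> dotv (phi *m a) u = c) -> ~ full_dim (P S a).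
Proof.
move=> u0 hc [p0 [p [Pp0 Pp hdet]]].
have hP : forall z, P S a z -> dotv z u = c.
  move=> z Pz; apply/eqP; rewrite eq_le; apply/andP; split.
    by apply: (conv_le _ Pz) => q [phi [Sphi ->]]; rewrite hc.
  by apply: (conv_ge _ Pz) => q [phi [Sphi ->]]; rewrite hc.
set D := \matrix_(i, j) (p j i 0 - p0 i 0).
have uD : u^T *m D = 0.
  apply/matrixP => i j; rewrite !mxE.
  have := hP _ (Pp j); have := hP _ Pp0.
  rewrite /dotv => h1 h2.
  have -> : \sum_j0 u^T i j0 * D j0 j = \sum_k p j k 0 * u k 0 - \sum_k p0 k 0 * u k 0.
    rewrite -sumrB; apply: eq_bigr => k _; rewrite !mxE (ord1 i) mulrBr mulrC.
    by rewrite [u k 0 * _]mulrC.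
  by rewrite h1 h2 subrr.
have Du : D \in unitmx by rewrite unitmxE unitfE.
move/negP: u0; apply; apply/eqP.
apply: trmx_inj; rewrite trmx0.
by rewrite -[u^T]mulmx1 -(mulmxV Du) mulmxA uD mul0mx.
Qed.

End Hyper.

Section Rank.
Variable R : realType.
Variable n : nat.
Local Notation m := n.+1.
Variable S : set 'M[R]_m.
Hypothesis HS : subgroup_O S.
Variable s : seq 'M[R]_m.
Hypothesis memS : forall M, S M <-> M \in s.

Lemma not_full_hyper a : ~ full_dim (P S a) ->
  exists u : 'cV[R]_m, u != 0 /\ forall phi, S phi -> dotv (phi *m a) u = dotv a u.
Proof.
move=> nf.
pose D : 'M[R]_(m, size s) := \matrix_(i, j) ((s`_j *m a) i 0 - a i 0).
case: (boolP (row_full D^T)) => [rf | nrf].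
  exfalso; apply: nf; pose f := fullrankfun rf.
  exists a, (fun j => s`_(f j) *m a); split.
  - exact: a_in_P.
  - by move=> j; apply: orbitP; apply/memS; apply: mem_nth.
  have := fullrowsub_unit rf; rewrite unitmxE unitfE -det_tr.
  congr (_ != 0); congr (\det _); apply/matrixP => i j; rewrite !mxE.
  done.
have rk : (\rank D < m)%N.
  by rewrite -mxrank_tr ltn_neqAle nrf rank_leq_col.
have K0 : kermx D != 0.
  by rewrite -mxrank_eq0 mxrank_ker subn_eq0 -ltnNge.
have [i Ki] : exists i, row i (kermx D) != 0.
  apply: contrapT => H; move/negP: K0; apply; apply/eqP/matrixP => i j.
  have /eqP/matrixP/(_ 0 j) : row i (kermx D) == 0.
    by apply: contrapT => hi; apply: H; exists i; apply/negP.
  by rewrite !mxE.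
exists (row i (kermx D))^T; split.
  by apply: contra Ki => /eqP /(congr1 trmx); rewrite trmxK trmx0 => ->.
move=> phi /memS phis.
have hj : (index phi s < size s)%N by rewrite index_mem.
have := congr1 (fun M : 'M[R]_(1, size s) => M 0 (Ordinal hj)) (row_mul i (kermx D) D).
rewrite mulmx_ker row0 [RHS]mxE mxE => h0.
apply/eqP; rewrite -subr_eq0; apply/eqP; rewrite /dotv -sumrB [RHS]h0.
apply: eq_bigr => k _; rewrite !mxE /= nth_index //.
by rewrite mulrC [a k 0 * _]mulrC -mulrBr.
Qed.

End Rank.

Local Close Scope classical_set_scope.

Section Eig.
Variable R : realType.

Lemma ReD (x y : R[i]) : complex.Re (x + y) = complex.Re x + complex.Re y.
Proof. by case: x; case: y. Qed.
Lemma ImD (x y : R[i]) : complex.Im (x + y) = complex.Im x + complex.Im y.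
Proof. by case: x; case: y. Qed.

Lemma Re_sum p (F : 'I_p -> R[i]) : complex.Re (\sum_(k < p) F k) = \sum_(k < p) complex.Re (F k).
Proof. by elim/big_rec2: _ => // k y1 y2 _ <-; rewrite ReD. Qed.
Lemma Im_sum p (F : 'I_p -> R[i]) : complex.Im (\sum_(k < p) F k) = \sum_(k < p) complex.Im (F k).
Proof. by elim/big_rec2: _ => // k y1 y2 _ <-; rewrite ImD. Qed.

Lemma ReMr (x : R[i]) (c : R) : complex.Re (x * (c%:C)%C) = complex.Re x * c.
Proof. by case: x => a b /=; rewrite mulr0 subr0. Qed.
Lemma ImMr (x : R[i]) (c : R) : complex.Im (x * (c%:C)%C) = complex.Im x * c.
Proof. by case: x => a b /=; rewrite mulr0 add0r. Qed.
Lemma ReM (x y : R[i]) : complex.Re (x * y) = complex.Re x * complex.Re y - complex.Im x * complex.Im y.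
Proof. by case: x; case: y. Qed.
Lemma ImM (x y : R[i]) : complex.Im (x * y) = complex.Re x * complex.Im y + complex.Im x * complex.Re y.
Proof. by case: x; case: y. Qed.

Lemma sym_eigen m (Q : 'M[R]_m.+1) : Q^T = Q ->
  exists mu (w : 'cV[R]_m.+1), w != 0 /\ Q *m w = mu *: w.
Proof.
move=> sQ.
pose Q' := map_mx (real_complex R) Q.
have [l /eigenvalueP [v hv v0]] := Theorem7' Q' (ltn0Sn m).
pose y := \row_j complex.Re (v 0 j); pose z := \row_j complex.Im (v 0 j).
pose al := complex.Re l; pose be := complex.Im l.
have E1 : y *m Q = al *: y - be *: z.
  apply/matrixP => i j; rewrite (ord1 i).
  have := congr1 (fun M : 'rV[R[i]]_m.+1 => complex.Re (M 0 j)) hv.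
  rewrite !mxE Re_sum ReM => <-; apply: eq_bigr => k _.
  by rewrite !mxE ReMr.
have E2 : z *m Q = al *: z + be *: y.
  apply/matrixP => i j; rewrite (ord1 i).
  have := congr1 (fun M : 'rV[R[i]]_m.+1 => complex.Im (M 0 j)) hv.
  rewrite !mxE Im_sum ImM => <-; apply: eq_bigr => k _.
  by rewrite !mxE ImMr.
have rowsq : forall u : 'rV[R]_m.+1, \sum_j u 0 j * u^T j 0 = dotv u^T u^T.
  by move=> u; rewrite dotvE trmxK mxE.
have key : (y *m Q) *m z^T = y *m (z *m Q)^T by rewrite trmx_mul sQ mulmxA.
rewrite E1 E2 mulmxBl -!scalemxAl linearD /= !linearZ /= mulmxDr -!scalemxAr in key.
have := congr1 (fun M : 'M[R]_1 => M 0 0) key; rewrite !mxE !rowsq => hk.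
have py := dotv_ge0 y^T; have pz := dotv_ge0 z^T.
have pos : 0 < dotv y^T y^T + dotv z^T z^T.
  rewrite lt_def addr_ge0 // andbT; apply/negP => /eqP h0.
  have hy : dotv y^T y^T = 0 by lra.
  have hz : dotv z^T z^T = 0 by lra.
  move/negP: v0; apply; apply/eqP/matrixP => i j; rewrite (ord1 i).
  have := congr1 (fun M : 'cV[R]_m.+1 => M j 0) (dotv_eq0 hy).
  have := congr1 (fun M : 'cV[R]_m.+1 => M j 0) (dotv_eq0 hz).
  rewrite !mxE; case: (v 0 j) => a b /= -> ->; done.
have hb : be * (dotv y^T y^T + dotv z^T z^T) = 0 by rewrite mulrDr; lra.
move/eqP: hb; rewrite mulf_eq0 (gt_eqF pos) orbF => /eqP be0.
rewrite be0 scale0r subr0 in E1; rewrite be0 scale0r addr0 in E2.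
have eigT : forall u : 'rV[R]_m.+1, u *m Q = al *: u -> Q *m u^T = al *: u^T.
  by move=> u hu; rewrite -[Q in Q *m _]sQ -trmx_mul hu linearZ.
case: (eqVneq y 0) => [y0|yn0].
  exists al, z^T; split; last exact: (eigT _ E2).
  have : z != 0.
    by apply/eqP => z0; move: pos; rewrite z0 y0 trmx0 dotv0l addr0 ltxx.
  by apply: contra => /eqP /(congr1 trmx); rewrite trmxK trmx0 => ->.
exists al, y^T; split; last exact: (eigT _ E1).
by apply: contra yn0 => /eqP /(congr1 trmx); rewrite trmxK trmx0 => ->.
Qed.

End Eig.

Local Open Scope classical_set_scope.

Lemma sum_const_seq (R : realType) (T : Type) (r : seq T) (c : R) :
  \sum_(i <- r) c = c *+ size r.
Proof. by elim: r => [|x r IH]; rewrite ?big_nil ?big_cons ?IH ?mulrS. Qed.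

Lemma dotv_sumr (R : realType) m (I : Type) (r : seq I) (F : I -> 'cV[R]_m) x :
  dotv x (\sum_(i <- r) F i) = \sum_(i <- r) dotv x (F i).
Proof. by rewrite dotvC dotv_suml; apply: eq_bigr => i _; rewrite dotvC. Qed.

Lemma dotv_outer (R : realType) m (p x : 'cV[R]_m) :
  dotv x ((p *m p^T) *m x) = dotv p x ^+ 2.
Proof.
rewrite dotvE -mulmxA mulmxA mxE big_ord1.
have e1 : (x^T *m p) 0 ord0 = dotv x p by rewrite dotvE.
have e2 : (p^T *m x) ord0 0 = dotv p x by rewrite dotvE.
by rewrite e1 e2 dotvC expr2.
Qed.

Lemma normalize (R : realType) n (u : 'cV[R]_n.+1) : u != 0 ->
  exists r : R, sphere n (r *: u).
Proof.
move=> u0; have hp : 0 < dotv u u.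
  rewrite lt_def dotv_ge0 andbT; apply: contra u0 => /eqP /dotv_eq0 ->; done.
exists (Num.sqrt (dotv u u))^-1; rewrite /sphere /= dotvZl dotvZr mulrA -expr2.
rewrite exprVn sqr_sqrtr ?mulVf ?ltW //; exact: lt0r_neq0.
Qed.

Section Main.
Variable R : realType.
Variable n : nat.
Local Notation m := n.+1.
Variable S : set 'M[R]_m.
Hypothesis HS : subgroup_O S.
Variable s : seq 'M[R]_m.
Hypothesis us : uniq s.
Hypothesis memS : forall M, S M <-> M \in s.

Lemma reindex psi : S psi -> perm_eq s (map (mulmx psi) s).
Proof.
move=> Spsi; have inj : injective (@mulmx _ m m m psi).
  by move=> A B h; rewrite -[A]mul1mx -[B]mul1mx -(S_orthT HS Spsi) -!mulmxA h.
apply: uniq_perm => //; first by rewrite map_inj_uniq.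
move=> M; apply/idP/idP => [Ms|/mapP [N Ns ->]].
  apply/mapP; exists (psi^T *m M); last by rewrite mulmxA (S_orth HS) // mul1mx.
  by apply/memS; apply: (S_mul HS); [apply: (S_tr HS) | apply/memS].
by apply/memS; apply: (S_mul HS) => //; apply/memS.
Qed.

Lemma sum_reindex (V : zmodType) psi (F : 'M[R]_m -> V) : S psi ->
  \sum_(phi <- s) F (psi *m phi) = \sum_(phi <- s) F phi.
Proof.
move=> Spsi; rewrite -(big_map (mulmx psi) xpredT F).
by apply: perm_big; rewrite perm_sym; apply: reindex.
Qed.

Hypothesis span : spanning S.

Lemma centroid a : sphere n a -> \sum_(phi <- s) phi *m a = 0.
Proof.
move=> ha; set v := \sum_(phi <- s) phi *m a.
have fix1 : forall psi, S psi -> psi *m v = v.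
  move=> psi Spsi; rewrite /v mulmx_sumr.
  rewrite -(sum_reindex (fun phi => phi *m a) Spsi).
  by apply: eq_bigr => phi _; rewrite mulmxA.
apply/eqP; apply: contraT => v0; exfalso.
apply: (hyper_not_full (c := dotv a v) v0 _ (span ha)).
by move=> phi Sphi; rewrite dotv_mull fix1 //; apply: (S_tr HS).
Qed.

Lemma schur a : sphere n a ->
  let Q := \sum_(phi <- s) (phi *m a) *m (phi *m a)^T in
  exists mu : R, Q = mu%:M.
Proof.
move=> ha Q.
have sQ : Q^T = Q.
  rewrite /Q linear_sum; apply: eq_bigr => phi _ /=; by rewrite trmx_mul trmxK.
have cQ : forall psi, S psi -> psi *m Q = Q *m psi.
  move=> psi Spsi.
  have : psi *m Q *m psi^T = Q.
    rewrite /Q mulmx_sumr mulmx_suml.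
    rewrite -[RHS](sum_reindex (fun phi => (phi *m a) *m (phi *m a)^T) Spsi).
    by apply: eq_bigr => phi _; rewrite !trmx_mul !mulmxA.
  move=> h; rewrite -[in RHS]h -mulmxA (S_orthT HS) // mulmx1 //.
have [mu [w [w0 hw]]] := sym_eigen sQ.
exists mu; apply/eqP; apply: contraT => hne; exfalso.
have [i [j hij]] : exists i j, (Q - mu%:M) i j != 0.
  apply: contrapT => H; move: hne; rewrite -subr_eq0 => /negP; apply.
  apply/eqP/matrixP => i j; rewrite [RHS]mxE.
  by apply/eqP; apply: contrapT => hh; apply: H; exists i, j; apply/negP.
pose u : 'cV[R]_m := (row i (Q - mu%:M))^T.
have u0 : u != 0.
  apply/negP => /eqP /matrixP /(_ j 0); rewrite !mxE => h.
  by move: hij; rewrite !mxE h eqxx.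
have eig0 : forall y, Q *m y = mu *: y -> dotv y u = 0.
  move=> y hy.
  have h : ((Q - mu%:M) *m y) i 0 = 0.
    by rewrite mulmxBl hy mul_scalar_mx subrr mxE.
  rewrite -h mxE /dotv; apply: eq_bigr => k _; rewrite !mxE mulrC.
  done.
have [r hr] := normalize w0.
have eigr : Q *m (r *: w) = mu *: (r *: w).
  by rewrite -scalemxAr hw !scalerA mulrC.
apply: (hyper_not_full (c := 0) u0 _ (span hr)).
move=> phi Sphi; apply: eig0.
by rewrite mulmxA -cQ // -mulmxA eigr scalemxAr.
Qed.

Lemma quad_sum a y : sphere n a ->
  let Q := \sum_(phi <- s) (phi *m a) *m (phi *m a)^T in
  dotv y (Q *m y) = \sum_(phi <- s) dotv (phi *m a) y ^+ 2.
Proof.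
move=> ha Q; rewrite /Q mulmx_suml dotv_sumr.
by apply: eq_bigr => phi _; rewrite dotv_outer.
Qed.

Lemma one_in_s : 1%:M \in s.
Proof. by apply/memS; apply: S_one. Qed.

Lemma h_lower a x : sphere n a -> sphere n x ->
  1 <= (size s)%:R * 2 * support_fn (P S a) x.
Proof.
move=> ha hx; set h := support_fn (P S a) x.
have [mu hQ] := schur ha.
have hmu : forall y, sphere n y ->
    \sum_(phi <- s) dotv (phi *m a) y ^+ 2 = mu.
  move=> y hy; rewrite -quad_sum // hQ mul_scalar_mx dotvZr.
  by rewrite /sphere /= in hy; rewrite hy mulr1.
have mu1 : 1 <= mu.
  rewrite -(hmu a ha) (bigD1_seq _ one_in_s us) /= mul1mx.
  rewrite /sphere /= in ha; rewrite ha expr1n lerDl.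
  by apply: sumr_ge0 => i _; apply: sqr_ge0.
have hsum : \sum_(phi <- s) dotv (phi *m a) x = 0.
  by rewrite -dotv_suml centroid // dotv0l.
have tle : forall phi, phi \in s -> dotv (phi *m a) x <= h.
  by move=> phi /memS Sphi; apply: h_lb.
have tb : forall phi, phi \in s -> -1 <= dotv (phi *m a) x <= 1.
  move=> phi /memS Sphi; have hp := sphere_S HS ha Sphi.
  rewrite dotv_le1 // andbT lerNl -dotvNr dotv_le1 //.
  by rewrite /sphere /= dotvNr dotvC dotvNr opprK.
have N0 : (0 < size s)%N.
  by rewrite lt0n size_eq0; apply/eqP => s0; move: one_in_s; rewrite s0 in_nil.
have Nr : 0 < (size s)%:R :> R by rewrite ltr0n.
have h0 : 0 <= h.
  have : \sum_(phi <- s) dotv (phi *m a) x <= \sum_(phi <- s) h.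
    by rewrite big_seq_cond [X in _ <= X]big_seq_cond; apply: ler_sum => phi /andP [hp _]; apply: tle.
  rewrite hsum sum_const_seq -mulr_natr => hh.
  by move: hh; rewrite pmulr_lge0.
have : \sum_(phi <- s) dotv (phi *m a) x ^+ 2 <= \sum_(phi <- s) (2 * h - dotv (phi *m a) x).
  rewrite big_seq_cond [X in _ <= X]big_seq_cond; apply: ler_sum => phi /andP [hp _].
  have := tle _ hp; have := tb _ hp; set t := dotv _ _ => /andP [t1 t2] t3.
  case: (lerP 0 t) => t0; nra.
rewrite hmu // sumrB hsum subr0 sum_const_seq -mulr_natr => hh.
lra.
Qed.

End Main.

Local Close Scope classical_set_scope.
Local Open Scope classical_set_scope.

Theorem proposition2p1 (R : realType) (n : nat) (S : set 'M[R]_n.+1) :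
  subgroup_O S -> discrete_mx S ->
  (spanning S <-> bounded_ratio S).
Proof.
move=> HS Hd; have [s [us memS]] := S_finite HS Hd.
split.
  move=> span.
  have key := h_lower HS us memS span.
  have N0 : (0 < size s)%N.
    by rewrite lt0n size_eq0; apply/eqP => s0; move: (one_in_s HS memS); rewrite s0 in_nil.
  set N := (size s)%:R * 2 : R.
  have Np : 0 < N by rewrite /N mulr_gt0 // ltr0n.
  have NV : N * N^-1 = 1 by rewrite mulfV // gt_eqF.
  have NVp : 0 < N^-1 by rewrite invr_gt0.
  have hm : forall a, sphere n a -> N^-1 <= hmin S a.
    move=> a ha; apply: hmin_ge => x hx.
    have := key a x ha hx; rewrite -/N => k; nra.
  split.
    by move=> a ha; apply: lt_le_trans (hm a ha).
  exists N => a ha; rewrite /gamma.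
  have hmp : 0 < hmin S a by apply: lt_le_trans (hm a ha).
  rewrite ler_pdivrMr //.
  have := hmax_le1 HS ha; have := hm a ha; nra.
move=> [hpos _] a ha; apply: contrapT => nf.
have [u [u0 hu]] := not_full_hyper HS memS nf.
have [r hr] := normalize u0.
have hr' : sphere n (- (r *: u)).
  by move: hr; rewrite /sphere /= dotvNl dotvNr opprK.
have h1 := hmin_le HS ha hr; have h2 := hmin_le HS ha hr'.
have h3 : support_fn (P S a) (r *: u) <= r * dotv a u.
  by apply: (h_ub HS) => phi Sphi; rewrite dotvZr hu.
have h4 : support_fn (P S a) (- (r *: u)) <= - (r * dotv a u).
  by apply: (h_ub HS) => phi Sphi; rewrite dotvNr dotvZr hu.
have := hpos a ha; lra.
Qed.
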